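(* Let $2\le r<s<k$ and let $H$ be a full $(s,s-r)$-starplus on $k$ vertices with excess $\lambda$ satisfying $$\lambda\le\frac{r\binom{k-s+r}{r}-(k-s+r)}{k-s}.$$ Then $H$ is $r$-balanced: every sub-hypergraph $H'\subseteq H$ with at least $s$ vertices satisfies $f^{(r)}(H')\le f^{(r)}(H)$.
   Context: A full $(s,c)$-starplus on $k$ vertices with excess $\lambda$ ($1\le c<s<k$) is an $s$-uniform hypergraph on a $k$-element vertex set $V$ with a distinguished $c$-set $C\subseteq V$, whose edge set is the edge-disjoint union of all $\binom{k-c}{s-c}$ $s$-subsets of $V$ containing $C$ and of $\lambda$ further $s$-subsets of $V$ not containing $C$. For an $s$-graph $H$ with $v_H$ vertices and $e_H$ edges, $f^{(r)}(H)=\frac{e_H}{v_H-s+r}$. *)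

(* Defs.v *)
From HB Require Import structures.
From mathcomp Require Import all_boot all_order all_algebra.
Set Implicit Arguments. Unset Strict Implicit. Unset Printing Implicit Defensive.
Import Order.TTheory GRing.Theory Num.Theory.

(* An s-uniform hypergraph on the finite vertex set T is given by its edge set
   E : {set {set T}} (every edge has exactly s vertices). *)
Definition uniform (T : finType) (s : nat) (E : {set {set T}}) : Prop :=
  forall e, e \in E -> #|e| = s.

(* Full (s,c)-starplus with distinguished c-set C and excess lam: the edge set
   is the disjoint union of all s-subsets containing C and of lam further
   s-subsets not containing C. *)
Definition full_starplus (T : finType) (s c lam : nat) (C : {set T})
    (E : {set {set T}}) : Prop :=
  [/\ #|C| = c,
      uniform s E,
      (forall e : {set T}, #|e| = s -> C \subset e -> e \in E)
    & #|[set e in E | ~~ (C \subset e)]| = lam].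

Definition f_r (T : finType) (s r : nat) (V : {set T}) (E : {set {set T}}) : rat :=
  (#|E|%:R / (#|V| - s + r)%:R)%R.

Definition subhypergraph (T : finType) (E : {set {set T}})
    (V' : {set T}) (E' : {set {set T}}) : Prop :=
  E' \subset E /\ (forall e, e \in E' -> e \subset V').

Definition r_balanced (T : finType) (s r : nat) (E : {set {set T}}) : Prop :=
  forall (V' : {set T}) (E' : {set {set T}}),
    subhypergraph E V' E' -> s <= #|V'| -> (f_r s r V' E' <= f_r s r [set: T] E)%R.

(* Main.v *)
Require Import Defs.
From mathcomp Require Import all_boot all_order all_algebra zify.
Import Order.TTheory GRing.Theory Num.Theory.

Lemma star_card (T : finType) (C W : {set T}) s r :
  #|C| + r = s -> C \subset W ->
  #|[set e : {set T} | (#|e| == s) && (C \subset e) && (e \subset W)]| =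
  'C(#|W :\: C|, r).
Proof.
move=> hs hCW; rewrite -cards_draws.
set D := [set A : {set T} | A \subset W :\: C & #|A| == r].
have disj : forall A : {set T}, A \in D -> A :&: C = set0.
  move=> A; rewrite inE => /andP[/subsetP h _]; apply/setP => x.
  rewrite !inE; case xA: (x \in A) => //=.
  by move: (h x xA); rewrite !inE => /andP[/negbTE ->].
have -> : [set e : {set T} | (#|e| == s) && (C \subset e) && (e \subset W)]
   = [set A :|: C | A in D].
  apply/setP => e; rewrite inE; apply/idP/imsetP.
  - move=> /andP[/andP[/eqP he hCe] heW]; exists (e :\: C).
      rewrite inE; apply/andP; split; first by apply: setSD.
      by rewrite cardsD (setIidPr hCe) he -hs addKn.
    by rewrite setUC -{1}(setID e C) (setIidPr hCe).
  - move=> [A AD ->]; move: (AD); rewrite inE => /andP[hA /eqP hr].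
    rewrite cardsU disj // cards0 subn0 hr addnC hs eqxx subsetUr /=.
    by rewrite subUset hCW andbT; apply: subset_trans hA (subsetDl _ _).
have back : forall A : {set T}, A \in D -> (A :|: C) :\: C = A.
  move=> A /disj hd; apply/setP => x; rewrite !inE.
  have := congr1 (fun S : {set T} => x \in S) hd; rewrite !inE.
  by case: (x \in A); case: (x \in C).
apply: card_in_imset => A1 A2 h1 h2 e.
by rewrite -(back _ h1) -(back _ h2) e.
Qed.

Lemma lemA q a : 'C(q.+1 + a, q.+1) <= 1 + a * 'C(q + a, q).
Proof.
elim: a => [|a IH]; first by rewrite !addn0 binn.
rewrite addnS binS.
have h1 : 'C(q + a, q) <= 'C(q + a.+1, q) by apply: leq_bin2l; lia.
have h2 : 'C(q.+1 + a, q) = 'C(q + a.+1, q) by rewrite addSnnS.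
rewrite h2; nia.
Qed.

Lemma lemB q a b : (a + b) * 'C(q.+1 + a, q.+1) <= a * 'C(q.+1 + a + b, q.+1) + b.
Proof.
elim: b => [|b IH]; first by rewrite !addn0.
have -> : 'C(q.+1 + a + b.+1, q.+1) = 'C(q.+1 + a + b, q.+1) + 'C(q.+1 + a + b, q)
  by rewrite addnS binS.
have hA := lemA q a.
have h1 : 'C(q + a, q) <= 'C(q.+1 + a + b, q) by apply: leq_bin2l; lia.
have h3 : a * 'C(q + a, q) <= a * 'C(q.+1 + a + b, q) by apply: leq_mul.
move: IH hA h3; rewrite mulnDr mulnDl.
set X := 'C(q.+1 + a + b, q.+1); set Y := 'C(q.+1 + a + b, q).
set c := 'C(q.+1 + a, q.+1); set Z := a * 'C(q + a, q).
lia.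
Qed.

Lemma key (r a b c N lam : nat) : 0 < r -> c <= N ->
  lam * (a + b) + (r + a + b) <= r * N -> (a + b) * c <= a * N + b ->
  (c + lam) * (r + a + b) <= (N + lam) * (r + a).
Proof.
move=> hr hcN h1 h2.
case: (posnP (a + b)) => hab.
  have ha : a = 0 by lia. have hb : b = 0 by lia. subst; nia.
nia.
Qed.

Lemma card_split (T : finType) (F : {set {set T}}) (P : pred {set T}) :
  #|F| = #|[set e in F | P e]| + #|[set e in F | ~~ P e]|.
Proof.
rewrite -(cardsID [set e | P e] F); congr (_ + _); apply: eq_card => e;
  by rewrite !inE andbC.
Qed.

Theorem proposition18 (r s k lam : nat) (T : finType) (C : {set T})
    (E : {set {set T}}) :
  2 <= r -> r < s -> s < k -> #|T| = k ->
  full_starplus s (s - r) lam C E ->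
  (lam%:R <=
     ((r * 'C(k - s + r, r))%:Z - (k - s + r)%:Z)%:~R / (k - s)%:R :> rat)%R ->
  r_balanced s r E.
Proof.
move=> hr hrs hsk hT [hC hunif hall hlam] hineq V' E' [hsub hin] hv.
set M := k - s + r. set N := 'C(M, r).
set m := #|V'| - s + r.
have hvk : #|V'| <= k by rewrite -hT max_card.
have h1 : lam * (k - s) + M <= r * N.
  have hks : (0 < (k - s)%:R :> rat)%R by rewrite ltr0n; lia.
  rewrite ler_pdivlMr // -natrM in hineq.
    have e : (((r * N)%:Z - M%:Z)%:~R : rat) = ((r * N)%:R - M%:R)%R.
    by rewrite rmorphB.
  rewrite e lerBrDr -natrD ler_nat in hineq; exact: hineq.
have hCr : #|C| + r = s by rewrite hC; lia.
have hE : #|E| = N + lam.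
  rewrite (@card_split _ E (fun e => C \subset e)) hlam; congr (_ + _).
  have -> : [set e in E | C \subset e] =
      [set e : {set T} | (#|e| == s) && (C \subset e) && (e \subset [set: T])].
    apply/setP => e; rewrite !inE subsetT andbT.
    apply/idP/idP.
    - by move=> /andP[he ->]; rewrite hunif // eqxx.
    - by move=> /andP[/eqP he hCe]; rewrite hall.
  rewrite (@star_card _ C _ s r hCr (subsetT C)).
  rewrite setTD.
  have := cardsC C; rewrite hT hC => hc.
  by rewrite /N /M; congr 'C(_, _); lia.
set c := 'C(m, r).
have hE' : #|E'| <= c + lam.
  rewrite (@card_split _ E' (fun e => C \subset e)); apply: leq_add.
  - case hCV : (C \subset V').
      apply: (@leq_trans #|[set e : {set T} | (#|e| == s) && (C \subset e) && (e \subset V')]|).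
        apply: subset_leq_card; apply/subsetP => e; rewrite !inE => /andP[eE' hCe].
        by rewrite hCe hin // hunif ?(subsetP hsub) // eqxx.
      rewrite (@star_card _ C _ s r hCr hCV).
      rewrite cardsD (setIidPr hCV) hC /c /m; apply: leq_bin2l; lia.
    apply: (@leq_trans #|(set0 : {set {set T}})|); last by rewrite cards0.
    apply: subset_leq_card; apply/subsetP => e; rewrite !inE => /andP[eE' hCe].
    by move: hCV; rewrite (subset_trans hCe (hin _ eE')).
  - rewrite -hlam; apply: subset_leq_card; apply/subsetP => e; rewrite !inE.
    by move=> /andP[eE' ->]; rewrite (subsetP hsub) .
have hnat : #|E'| * M <= #|E| * m.
  have [q hq] : exists q, r = q.+1 by exists r.-1; lia.
  have hB := lemB q (m - r) (M - m).
  have hcN : c <= N by apply: leq_bin2l; lia.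
  have hk := key r (m - r) (M - m) c N lam.
  have e1 : r + (m - r) + (M - m) = M by lia.
  have e2 : r + (m - r) = m by lia.
  have e3 : m - r + (M - m) = k - s by lia.
  rewrite e1 e2 e3 in hk.
  rewrite -hq in hB.
  have e4 : m + (M - m) = M by lia.
  move: hB; rewrite e2 e4 => hB.
  rewrite e3 in hB.
  have hr0 : 0 < r by lia.
  have := hk hr0 hcN h1 hB => hfin.
  rewrite hE; apply: leq_trans hfin; exact: leq_mul.
rewrite /f_r cardsT hT -/M -/m.
have hm : (0 < m%:R :> rat)%R by rewrite ltr0n; lia.
have hM : (0 < M%:R :> rat)%R by rewrite ltr0n; lia.
by rewrite ler_pdivrMr // mulrAC ler_pdivlMr // -!natrM ler_nat.
Qed.
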